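(* Let $I\subset\mathbb{R}$ be an open interval and let $x_1,x_2,\varphi:I\to\mathbb{R}$ be smooth functions such that the curve $\gamma(u)=(x_1(u),x_2(u),\cos\varphi(u),\sin\varphi(u))$ in $\mathbb{E}^4$ is parametrized by arclength, i.e. $(x_1')^2+(x_2')^2+(\varphi')^2=1$, and such that $1-(\varphi'(u))^2\neq 0$ for all $u\in I$. Let $M$ be the surface with position vector $$X(u,v)=\big(x_1(u),\,x_2(u),\,\cos\varphi(u)\cos v-\sin\varphi(u)\sin v,\,\cos\varphi(u)\sin v+\sin\varphi(u)\cos v\big).$$ Then the mean curvature vector $\vec H$ of $M$ satisfies, at each point, $$\|\vec H\|^2=\frac{1}{4\left(1-(\varphi'(u))^2\right)^2}\left(\kappa_\gamma^2+1-2(\varphi'(u))^2-\frac{(\varphi''(u))^2}{1-(\varphi'(u))^2}\right),$$ where $\kappa_\gamma=\|\gamma''(u)\|$ is the curvature of the profile curve $\gamma$.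
   Context: With $E=\langle X_u,X_u\rangle$, $F=\langle X_u,X_v\rangle$, $G=\langle X_v,X_v\rangle$ and $W^2=EG-F^2$, the second fundamental form $h$ is the normal component of the second derivatives: $h(X_u,X_u)=(X_{uu})^\perp$, $h(X_u,X_v)=(X_{uv})^\perp$, $h(X_v,X_v)=(X_{vv})^\perp$ (orthogonal projection onto the normal plane of $M$). The mean curvature vector is $\vec H=\frac{1}{2W^2}\big(E\,h(X_v,X_v)-2F\,h(X_u,X_v)+G\,h(X_u,X_u)\big)$. *)

(* Defs.v *)
From Stdlib Require Import Reals.
From Coquelicot Require Import Coquelicot.
Open Scope R_scope.

(* Vectors of E^4 : components indexed by 0,1,2,3 (other indices unused). *)
Definition vec4 := nat -> R.

Definition dot4 (a b : vec4) : R :=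
  a 0%nat * b 0%nat + a 1%nat * b 1%nat + a 2%nat * b 2%nat + a 3%nat * b 3%nat.

Definition norm2_4 (a : vec4) : R := dot4 a a.

Definition in_I (a b : Rbar) (u : R) : Prop := Rbar_lt a u /\ Rbar_lt u b.

Definition smooth_on (a b : Rbar) (f : R -> R) : Prop :=
  forall (n : nat) (u : R), in_I a b u -> ex_derive_n f n u.

Definition surf := R -> R -> vec4.

Definition d_u (X : surf) : surf := fun u v i => Derive (fun t => X t v i) u.
Definition d_v (X : surf) : surf := fun u v i => Derive (fun t => X u t i) v.

Definition Xu (X : surf) : surf := d_u X.
Definition Xv (X : surf) : surf := d_v X.
Definition Xuu (X : surf) : surf := d_u (d_u X).
Definition Xuv (X : surf) : surf := d_v (d_u X).
Definition Xvv (X : surf) : surf := d_v (d_v X).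

Definition EE (X : surf) u v := dot4 (Xu X u v) (Xu X u v).
Definition FF (X : surf) u v := dot4 (Xu X u v) (Xv X u v).
Definition GG (X : surf) u v := dot4 (Xv X u v) (Xv X u v).
Definition W2 (X : surf) u v := EE X u v * GG X u v - FF X u v ^ 2.

(* Orthogonal projection of w onto the tangent plane span(X_u, X_v)
   (Gram-matrix formula, valid when W^2 <> 0), and onto the normal plane. *)
Definition tangent_part (X : surf) (u v : R) (w : vec4) : vec4 :=
  fun i =>
    ((GG X u v * dot4 w (Xu X u v) - FF X u v * dot4 w (Xv X u v)) * Xu X u v i
   + (EE X u v * dot4 w (Xv X u v) - FF X u v * dot4 w (Xu X u v)) * Xv X u v i)
    / W2 X u v.

Definition normal_part (X : surf) (u v : R) (w : vec4) : vec4 :=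
  fun i => w i - tangent_part X u v w i.

Definition h_uu (X : surf) u v := normal_part X u v (Xuu X u v).
Definition h_uv (X : surf) u v := normal_part X u v (Xuv X u v).
Definition h_vv (X : surf) u v := normal_part X u v (Xvv X u v).

Definition mean_curv (X : surf) (u v : R) : vec4 :=
  fun i => / (2 * W2 X u v) *
    (EE X u v * h_vv X u v i - 2 * FF X u v * h_uv X u v i
     + GG X u v * h_uu X u v i).

Definition gamma (x1 x2 phi : R -> R) (u : R) : vec4 :=
  fun i => match i with
           | 0%nat => x1 u
           | 1%nat => x2 u
           | 2%nat => cos (phi u)
           | 3%nat => sin (phi u)
           | _ => 0
           end.

Definition surfX (x1 x2 phi : R -> R) : surf :=
  fun u v i => match i with
           | 0%nat => x1 u
           | 1%nat => x2 u
           | 2%nat => cos (phi u) * cos v - sin (phi u) * sin v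
           | 3%nat => cos (phi u) * sin v + sin (phi u) * cos v
           | _ => 0
           end.

Definition kappa (x1 x2 phi : R -> R) (u : R) : R :=
  sqrt (norm2_4 (fun i => Derive_n (fun t => gamma x1 x2 phi t i) 2 u)).

(* Main.v *)
Require Import Defs.
From Stdlib Require Import Reals Lra.
From Coquelicot Require Import Coquelicot.
Open Scope R_scope.

Lemma Dcos0 y : Derive cos y = - sin y.
Proof. apply is_derive_unique, is_derive_cos. Qed.
Lemma Dsin0 y : Derive sin y = cos y.
Proof. apply is_derive_unique, is_derive_sin. Qed.
Lemma excos y : ex_derive cos y.
Proof. eexists; apply is_derive_cos. Qed.
Lemma exsin y : ex_derive sin y.
Proof. eexists; apply is_derive_sin. Qed.

Lemma exshift f v t : ex_derive f t -> ex_derive (fun t => f t + v) t.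
Proof. intro H. apply (ex_derive_plus f (fun _ => v)); auto. apply ex_derive_const. Qed.
Lemma Dshift f v t : ex_derive f t -> Derive (fun t => f t + v) t = Derive f t.
Proof. intro H. rewrite Derive_plus; auto. rewrite Derive_const; ring. apply ex_derive_const. Qed.

Lemma Dcos f v t : ex_derive f t ->
  Derive (fun t => cos (f t + v)) t = - sin (f t + v) * Derive f t.
Proof. intro H. rewrite (Derive_comp cos (fun t => f t + v)).
  rewrite Dshift by auto; rewrite Dcos0; ring. apply excos. apply exshift; auto. Qed.
Lemma Dsin f v t : ex_derive f t ->
  Derive (fun t => sin (f t + v)) t = cos (f t + v) * Derive f t.
Proof. intro H. rewrite (Derive_comp sin (fun t => f t + v)).
  rewrite Dshift by auto; rewrite Dsin0; ring. apply exsin. apply exshift; auto. Qed.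
Lemma excosf f v t : ex_derive f t -> ex_derive (fun t => cos (f t + v)) t.
Proof. intro H. eapply (ex_derive_comp cos (fun t => f t + v)). apply excos. apply exshift; auto. Qed.
Lemma exsinf f v t : ex_derive f t -> ex_derive (fun t => sin (f t + v)) t.
Proof. intro H. eapply (ex_derive_comp sin (fun t => f t + v)). apply exsin. apply exshift; auto. Qed.

Lemma loc_I a b u : in_I a b u -> locally u (in_I a b).
Proof. intro H. eapply (locally_open (in_I a b)); auto.
  apply open_and. apply open_Rbar_gt. apply open_Rbar_lt. Qed.

Lemma DDcos a b f v u : in_I a b u -> (forall t, in_I a b t -> ex_derive f t) ->
  ex_derive (Derive f) u ->
  Derive (fun t => Derive (fun t => cos (f t + v)) t) u
  = - cos (f u + v) * (Derive f u)^2 - sin (f u + v) * Derive (Derive f) u.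
Proof. intros Hu Hf Hf2.
  rewrite (Derive_ext_loc _ (fun t => - sin (f t + v) * Derive f t)).
  rewrite Derive_mult. rewrite Derive_opp, Dsin. ring.
  apply Hf; auto. apply (ex_derive_opp (fun x => sin (f x + v))). apply exsinf; auto. auto.
  eapply filter_imp; [| apply (loc_I a b u Hu)]; intros t Ht; simpl. apply Dcos; auto. Qed.
Lemma DDsin a b f v u : in_I a b u -> (forall t, in_I a b t -> ex_derive f t) ->
  ex_derive (Derive f) u ->
  Derive (fun t => Derive (fun t => sin (f t + v)) t) u
  = - sin (f u + v) * (Derive f u)^2 + cos (f u + v) * Derive (Derive f) u.
Proof. intros Hu Hf Hf2.
  rewrite (Derive_ext_loc _ (fun t => cos (f t + v) * Derive f t)).
  rewrite Derive_mult. rewrite Dcos. ring.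
  apply Hf; auto. apply excosf; auto. auto.
  eapply filter_imp; [| apply (loc_I a b u Hu)]; intros t Ht; simpl. apply Dsin; auto. Qed.

Lemma key X u v w s s2 : EE X u v = 1 -> FF X u v = s -> GG X u v = 1 ->
  dot4 w (Xu X u v) = 0 -> dot4 w (Xv X u v) = s2 -> 1 - s^2 <> 0 ->
  norm2_4 (normal_part X u v w) = norm2_4 w - s2^2/(1-s^2).
Proof.
  intros HE HF HG H1 H2 HW.
  unfold normal_part, tangent_part, W2. rewrite HE, HF, HG, H1, H2.
  set (A := Xu X u v) in *. set (B := Xv X u v) in *.
  assert (EA : dot4 A A = 1) by exact HE.
  assert (EB : dot4 B B = 1) by exact HG.
  assert (EAB : dot4 A B = s) by exact HF.
  transitivity (norm2_4 w + 2 * s2 / (1*1 - s^2) * (s * dot4 w A - dot4 w B)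
     + (s2 / (1*1-s^2))^2 * (s^2 * dot4 A A - 2 * s * dot4 A B + dot4 B B)).
  { unfold norm2_4, dot4. field. replace (1*1 - s^2) with (1 - s^2) by ring. exact HW. }
  rewrite EA, EB, EAB, H1, H2. field. exact HW.
Qed.

Lemma mc_red X u v : W2 X u v <> 0 ->
  norm2_4 (mean_curv X u v) = (/ (2 * W2 X u v))^2 *
   norm2_4 (normal_part X u v (fun j => EE X u v * Xvv X u v j - 2 * FF X u v * Xuv X u v j + GG X u v * Xuu X u v j)).
Proof.
  intro HW. unfold norm2_4, mean_curv, h_uu, h_uv, h_vv, normal_part, tangent_part, dot4.
  field. auto.
Qed.

Theorem proposition2 (a b : Rbar) (x1 x2 phi : R -> R)
  (Hab : Rbar_lt a b)
  (Hx1 : smooth_on a b x1) (Hx2 : smooth_on a b x2) (Hphi : smooth_on a b phi)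
  (Harc : forall u, in_I a b u ->
     (Derive x1 u) ^ 2 + (Derive x2 u) ^ 2 + (Derive phi u) ^ 2 = 1)
  (Hreg : forall u, in_I a b u -> 1 - (Derive phi u) ^ 2 <> 0) :
  forall u v : R, in_I a b u ->
    norm2_4 (mean_curv (surfX x1 x2 phi) u v) =
    / (4 * (1 - (Derive phi u) ^ 2) ^ 2) *
    (kappa x1 x2 phi u ^ 2 + 1 - 2 * (Derive phi u) ^ 2
     - (Derive_n phi 2 u) ^ 2 / (1 - (Derive phi u) ^ 2)).
Proof.
  intros u v Hu.
  assert (hx1 : forall t, in_I a b t -> ex_derive x1 t) by (intros t Ht; exact (Hx1 1%nat t Ht)).
  assert (hx2 : forall t, in_I a b t -> ex_derive x2 t) by (intros t Ht; exact (Hx2 1%nat t Ht)).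
  assert (hph : forall t, in_I a b t -> ex_derive phi t) by (intros t Ht; exact (Hphi 1%nat t Ht)).
  assert (hx1' : ex_derive (Derive x1) u) by exact (Hx1 2%nat u Hu).
  assert (hx2' : ex_derive (Derive x2) u) by exact (Hx2 2%nat u Hu).
  assert (hph' : ex_derive (Derive phi) u) by exact (Hphi 2%nat u Hu).
  set (X := surfX x1 x2 phi).
  assert (U0 : forall w, Xu X u w 0%nat = Derive x1 u) by reflexivity.
  assert (U1 : forall w, Xu X u w 1%nat = Derive x2 u) by reflexivity.
  assert (U2 : forall w, Xu X u w 2%nat = - sin (phi u + w) * Derive phi u).
  { intro w. unfold Xu, d_u, X, surfX.
    rewrite (Derive_ext _ (fun t => cos (phi t + w))).
    apply Dcos; auto. intro t; rewrite cos_plus; ring. }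
  assert (U3 : forall w, Xu X u w 3%nat = cos (phi u + w) * Derive phi u).
  { intro w. unfold Xu, d_u, X, surfX.
    rewrite (Derive_ext _ (fun t => sin (phi t + w))).
    apply Dsin; auto. intro t; rewrite sin_plus; ring. }
  assert (V0 : forall w, Xv X u w 0%nat = 0) by (intro w; unfold Xv, d_v, X, surfX; apply Derive_const).
  assert (V1 : forall w, Xv X u w 1%nat = 0) by (intro w; unfold Xv, d_v, X, surfX; apply Derive_const).
  assert (V2 : forall w, Xv X u w 2%nat = - sin (phi u + w)).
  { intro w. unfold Xv, d_v, X, surfX.
    rewrite (Derive_ext _ (fun t => cos (id t + phi u))).
    rewrite Dcos. rewrite Derive_id. unfold id. rewrite Rplus_comm. ring.
    apply ex_derive_id. intro t; unfold id. rewrite Rplus_comm, cos_plus; ring. }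
  assert (V3 : forall w, Xv X u w 3%nat = cos (phi u + w)).
  { intro w. unfold Xv, d_v, X, surfX.
    rewrite (Derive_ext _ (fun t => sin (id t + phi u))).
    rewrite Dsin. rewrite Derive_id. unfold id. rewrite Rplus_comm. ring.
    apply ex_derive_id. intro t; unfold id. rewrite Rplus_comm, sin_plus; ring. }
  assert (UU0 : Xuu X u v 0%nat = Derive (Derive x1) u) by reflexivity.
  assert (UU1 : Xuu X u v 1%nat = Derive (Derive x2) u) by reflexivity.
  assert (UU2 : Xuu X u v 2%nat = - cos (phi u + v) * (Derive phi u)^2 - sin (phi u + v) * Derive (Derive phi) u).
  { unfold Xuu, d_u, X, surfX.
    rewrite (Derive_ext _ (fun t => Derive (fun t0 => cos (phi t0 + v)) t)).
    apply (DDcos a b); auto.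
    intro t. apply Derive_ext. intro t0; rewrite cos_plus; ring. }
  assert (UU3 : Xuu X u v 3%nat = - sin (phi u + v) * (Derive phi u)^2 + cos (phi u + v) * Derive (Derive phi) u).
  { unfold Xuu, d_u, X, surfX.
    rewrite (Derive_ext _ (fun t => Derive (fun t0 => sin (phi t0 + v)) t)).
    apply (DDsin a b); auto.
    intro t. apply Derive_ext. intro t0; rewrite sin_plus; ring. }
  assert (UV0 : Xuv X u v 0%nat = 0) by (unfold Xuv, d_v, d_u, X, surfX; apply Derive_const).
  assert (UV1 : Xuv X u v 1%nat = 0) by (unfold Xuv, d_v, d_u, X, surfX; apply Derive_const).
  assert (UV2 : Xuv X u v 2%nat = - cos (phi u + v) * Derive phi u).
  { unfold Xuv, d_v.
    rewrite (Derive_ext _ (fun t => (- Derive phi u) * sin (id t + phi u))).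
    rewrite Derive_scal, Dsin, Derive_id. unfold id. rewrite Rplus_comm. ring.
    apply ex_derive_id. intro t. unfold id. rewrite (Rplus_comm t). change (Xu X u t 2%nat = - Derive phi u * sin (phi u + t)). rewrite U2; ring. }
  assert (UV3 : Xuv X u v 3%nat = - sin (phi u + v) * Derive phi u).
  { unfold Xuv, d_v.
    rewrite (Derive_ext _ (fun t => (Derive phi u) * cos (id t + phi u))).
    rewrite Derive_scal, Dcos, Derive_id. unfold id. rewrite Rplus_comm. ring.
    apply ex_derive_id. intro t. unfold id. rewrite (Rplus_comm t). change (Xu X u t 3%nat = Derive phi u * cos (phi u + t)). rewrite U3; ring. }
  assert (VV0 : Xvv X u v 0%nat = 0).
  { unfold Xvv, d_v. rewrite (Derive_ext _ (fun _ => 0)). apply Derive_const. intro t; exact (V0 t). }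
  assert (VV1 : Xvv X u v 1%nat = 0).
  { unfold Xvv, d_v. rewrite (Derive_ext _ (fun _ => 0)). apply Derive_const. intro t; exact (V1 t). }
  assert (VV2 : Xvv X u v 2%nat = - cos (phi u + v)).
  { unfold Xvv, d_v.
    rewrite (Derive_ext _ (fun t => (- 1) * sin (id t + phi u))).
    rewrite Derive_scal, Dsin, Derive_id. unfold id. rewrite Rplus_comm. ring.
    apply ex_derive_id. intro t. unfold id. rewrite (Rplus_comm t). change (Xv X u t 2%nat = -1 * sin (phi u + t)). rewrite (V2 t). ring. }
  assert (VV3 : Xvv X u v 3%nat = - sin (phi u + v)).
  { unfold Xvv, d_v.
    rewrite (Derive_ext _ (fun t => cos (id t + phi u))).
    rewrite Dcos, Derive_id. unfold id. rewrite Rplus_comm. ring.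
    apply ex_derive_id. intro t. unfold id. rewrite (Rplus_comm t). exact (V3 t). }
  assert (H0 : Derive (fun t => Derive x1 t ^2 + Derive x2 t ^2 + Derive phi t ^2) u = 0).
  { rewrite (Derive_ext_loc _ (fun _ => 1)). apply Derive_const.
    eapply filter_imp; [|apply (loc_I a b u Hu)]. intros t Ht; apply Harc; auto. }
  assert (e1 : ex_derive (fun t => Derive x1 t ^2) u) by (apply ex_derive_pow; auto).
  assert (e2 : ex_derive (fun t => Derive x2 t ^2) u) by (apply ex_derive_pow; auto).
  assert (e3 : ex_derive (fun t => Derive phi t ^2) u) by (apply ex_derive_pow; auto).
  assert (e12 : ex_derive (fun t => Derive x1 t ^2 + Derive x2 t ^2) u)
    by (apply (ex_derive_plus (fun t => Derive x1 t ^2) (fun t => Derive x2 t ^2)); auto).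
  rewrite (Derive_plus (fun t => Derive x1 t ^2 + Derive x2 t ^2)) in H0 by auto.
  rewrite (Derive_plus (fun t => Derive x1 t ^2)) in H0 by auto.
  rewrite !Derive_pow in H0 by auto.
  assert (Hcs : cos (phi u + v) ^ 2 + sin (phi u + v) ^ 2 = 1).
  { rewrite <- (sin2_cos2 (phi u + v)). unfold Rsqr. ring. }
  assert (HA := Harc u Hu). assert (HW := Hreg u Hu).
  change (Derive_n phi 2 u) with (Derive (Derive phi) u).
  assert (Hk : kappa x1 x2 phi u ^ 2 = Derive (Derive x1) u ^ 2 + Derive (Derive x2) u ^ 2
       + Derive phi u ^ 4 + Derive (Derive phi) u ^ 2).
  { unfold kappa. rewrite pow2_sqrt.
    2: unfold norm2_4, dot4; nra.
    unfold norm2_4, dot4.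
    change (Derive_n (fun t => gamma x1 x2 phi t 0%nat) 2 u) with (Derive (Derive x1) u).
    change (Derive_n (fun t => gamma x1 x2 phi t 1%nat) 2 u) with (Derive (Derive x2) u).
    change (Derive_n (fun t => gamma x1 x2 phi t 2%nat) 2 u) with
      (Derive (fun t => Derive (fun t' => cos (phi t')) t) u).
    change (Derive_n (fun t => gamma x1 x2 phi t 3%nat) 2 u) with
      (Derive (fun t => Derive (fun t' => sin (phi t')) t) u).
    rewrite (Derive_ext (fun t => Derive (fun t' => cos (phi t')) t) (fun t => Derive (fun t' => cos (phi t' + 0)) t)).
    2: intro t; apply Derive_ext; intro; rewrite Rplus_0_r; reflexivity.
    rewrite (Derive_ext (fun t => Derive (fun t' => sin (phi t')) t) (fun t => Derive (fun t' => sin (phi t' + 0)) t)).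
    2: intro t; apply Derive_ext; intro; rewrite Rplus_0_r; reflexivity.
    rewrite (DDcos a b), (DDsin a b); auto.
    assert (Hcs0 : cos (phi u + 0) ^ 2 + sin (phi u + 0) ^ 2 = 1).
    { rewrite <- (sin2_cos2 (phi u + 0)). unfold Rsqr. ring. }
    set (c := cos (phi u + 0)) in *. set (S := sin (phi u + 0)) in *.
    set (s := Derive phi u). set (s2 := Derive (Derive phi) u).
    transitivity (Derive (Derive x1) u * Derive (Derive x1) u + Derive (Derive x2) u * Derive (Derive x2) u + (s^4 + s2^2) * (c^2+S^2)).
    ring. rewrite Hcs0. ring. }
  rewrite Hk.
  assert (HE : EE X u v = 1).
  { unfold EE, dot4. rewrite U0, U1, U2, U3.
    transitivity (Derive x1 u ^2 + Derive x2 u ^2 + Derive phi u ^2 * (cos (phi u + v) ^ 2 + sin (phi u + v) ^ 2)).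
    ring. rewrite Hcs, Rmult_1_r. exact HA. }
  assert (HF : FF X u v = Derive phi u).
  { unfold FF, dot4. rewrite U0, U1, U2, U3, V0, V1, V2, V3.
    transitivity (Derive phi u * (cos (phi u + v) ^ 2 + sin (phi u + v) ^ 2)).
    ring. rewrite Hcs. ring. }
  assert (HG : GG X u v = 1).
  { unfold GG, dot4. rewrite V0, V1, V2, V3. rewrite <- Hcs. ring. }
  assert (HW2 : W2 X u v = 1 - Derive phi u ^ 2).
  { unfold W2. rewrite HE, HF, HG. ring. }
  rewrite mc_red by (rewrite HW2; exact HW).
  rewrite (key X u v _ (Derive phi u) (Derive (Derive phi) u)); auto.
  3: { unfold dot4. rewrite HE, HF, HG, VV0, VV1, VV2, VV3, UV0, UV1, UV2, UV3, UU0, UU1, UU2, UU3, V0, V1, V2, V3.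
       transitivity (Derive (Derive phi) u * (cos (phi u + v) ^ 2 + sin (phi u + v) ^ 2)).
       ring. rewrite Hcs. ring. }
  2: { unfold dot4. rewrite HE, HF, HG, VV0, VV1, VV2, VV3, UV0, UV1, UV2, UV3, UU0, UU1, UU2, UU3, U0, U1, U2, U3.
       transitivity (Derive x1 u * Derive (Derive x1) u + Derive x2 u * Derive (Derive x2) u + Derive phi u * Derive (Derive phi) u * (cos (phi u + v) ^ 2 + sin (phi u + v) ^ 2)).
       ring. rewrite Hcs. simpl in H0. nra. }
  unfold norm2_4, dot4. rewrite HE, HF, HG, HW2, VV0, VV1, VV2, VV3, UV0, UV1, UV2, UV3, UU0, UU1, UU2, UU3.
  set (c := cos (phi u + v)) in *. set (S := sin (phi u + v)) in *.
  set (s := Derive phi u) in *. set (s2 := Derive (Derive phi) u) in *.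
  transitivity (/ (2 * (1 - s ^ 2)) ^ 2 * (Derive (Derive x1) u ^2 + Derive (Derive x2) u ^2 + ((1 - s^2)^2 + s2^2) * (c^2 + S^2) - s2^2 / (1 - s^2))).
  field. exact HW.
  rewrite Hcs. field. exact HW.
Qed.
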